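(* Let $G$ be a network such that either $J^G_1\equiv0$ or $J^G_0\equiv0$. Then the underlying simple graph of $G$ is a tree.
   Context: A network is a finite connected loopless multigraph, possibly with multiple edges. Let $G$ have $m$ edges and $n$ vertices, and put $d=m-n+1$. Let $R_G(q)$ be the probability that deleting each edge independently with probability $q$ leaves a connected spanning subgraph. Put $H_G(q)=(1-q)^{1-n}R_G(q)$ (a polynomial) and $J_G(u)=(u-1)^dH_G\big(\frac{-1-u}{1-u}\big)$. Write $J_G(u)=J^G_0(u^2)+uJ^G_1(u^2)$ with $J^G_0,J^G_1\in\mathbb{R}[x]$. The underlying simple graph of $G$ has the same vertices and one edge for each pair of adjacent vertices. *)

(* Defs.v *)
From HB Require Import structures.
From mathcomp Require Import all_boot all_order all_algebra.
From mathcomp Require Import reals.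
Set Implicit Arguments. Unset Strict Implicit. Unset Printing Implicit Defensive.
Import Order.TTheory GRing.Theory Num.Theory.
Local Open Scope ring_scope.

(* A network with n vertices ('I_n) and m edges ('I_m); edge i joins the
   endpoints (e i).1 and (e i).2 (parallel edges allowed). *)
Section Network.
Variables (n m : nat) (e : 'I_m -> 'I_n * 'I_n).

Definition sub_adj (S : {set 'I_m}) : rel 'I_n :=
  fun x y => [exists i in S, (e i == (x, y)) || (e i == (y, x))].

Definition sub_connected (S : {set 'I_m}) : bool :=
  [forall x, [forall y, connect (sub_adj S) x y]].

Definition is_network : Prop :=
  (0 < n)%N /\ (forall i, (e i).1 != (e i).2) /\ sub_connected setT.

(* all-terminal reliability polynomial R_G(q): each edge is deleted
   independently with probability q, kept with probability 1 - q *)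
Definition reliability (R : realType) : {poly R} :=
  \sum_(S : {set 'I_m} | sub_connected S)
     (1 - 'X) ^+ #|S| * 'X ^+ (m - #|S|).

(* H_G(q) = (1-q)^(1-n) R_G(q), as a polynomial *)
Definition Hpoly (R : realType) : {poly R} :=
  reliability R %/ (1 - 'X) ^+ (n - 1).

Definition cyclo : nat := (m + 1 - n)%N.

Definition Jfun (R : realType) (u : R) : R :=
  (u - 1) ^+ cyclo * (Hpoly R).[(-1 - u) / (1 - u)].

Definition simple_adj : rel 'I_n :=
  fun x y => (x != y) && [exists i, (e i == (x, y)) || (e i == (y, x))].

End Network.

Definition is_tree (k : nat) (adj : rel 'I_k) : Prop :=
  (forall x y, connect adj x y) /\
  (forall c : seq 'I_k, uniq c -> (2 < size c)%N -> ~~ cycle adj c).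

(* Main.v *)
Require Import Defs.
From HB Require Import structures.
From mathcomp Require Import all_boot all_order all_algebra.
From mathcomp Require Import reals.
From mathcomp Require Import zify ring.
Import Order.TTheory GRing.Theory Num.Theory.
Set Implicit Arguments. Unset Strict Implicit. Unset Printing Implicit Defensive.

Section Graph.
Variables (n m : nat) (e : 'I_m -> 'I_n * 'I_n).
Hypothesis loopless : forall i, (e i).1 != (e i).2.

Local Notation adj := (sub_adj e).
Local Notation conn := (sub_connected e).

Definition ends (h : 'I_m) (v : 'I_n) := ((e h).1 == v) || ((e h).2 == v).
Definition joins (h : 'I_m) x y := (e h == (x, y)) || (e h == (y, x)).

Lemma adjP (S : {set 'I_m}) x y : reflect (exists2 i, i \in S & joins i x y) (adj S x y).
Proof.
apply: (iffP existsP) => [[i /andP[iS j]]|[i iS j]]; first by exists i.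
by exists i; rewrite iS.
Qed.

Lemma joins_sym h x y : joins h x y = joins h y x.
Proof. by rewrite /joins orbC. Qed.

Lemma adj_sym (S : {set 'I_m}) : symmetric (adj S).
Proof.
move=> x y; apply/adjP/adjP => -[i iS j]; exists i => //; by rewrite joins_sym.
Qed.

Lemma joins_e h : joins h (e h).1 (e h).2.
Proof. by rewrite /joins -surjective_pairing eqxx. Qed.

Lemma joins_neq h x y : joins h x y -> x != y.
Proof.
move=> j; have := loopless h; case/orP: j => /eqP -> //=.
by rewrite eq_sym.
Qed.

Lemma adj_neq (S : {set 'I_m}) x y : adj S x y -> x != y.
Proof. by case/adjP=> i _ /joins_neq. Qed.

Lemma ends_joins h x y z : joins h x y -> ends h z -> z = x \/ z = y.
Proof.
rewrite /ends; case/orP=> /eqP -> /=; case/orP=> /eqP ->; auto.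
Qed.

Lemma joins_ends h x y : joins h x y -> ends h x && ends h y.
Proof. by rewrite /ends; case/orP=> /eqP -> /=; rewrite !eqxx ?orbT. Qed.

Lemma joins_joins h x y a b : joins h x y -> joins h a b ->
  (a = x /\ b = y) \/ (a = y /\ b = x).
Proof.
rewrite /joins; case/orP => /eqP E; case/orP => /eqP E'; rewrite E in E';
  case: E' => -> ->; auto.
Qed.

Lemma adj_mono (S S' : {set 'I_m}) x y : S \subset S' -> adj S x y -> adj S' x y.
Proof. move=> sub /adjP[i iS j]; apply/adjP; exists i => //; exact: (subsetP sub). Qed.

Lemma connP (S : {set 'I_m}) : reflect (forall x y, connect (adj S) x y) (conn S).
Proof.
apply: (iffP forallP) => [H x y|H x]; first by have /forallP := H x; apply.
by apply/forallP.
Qed.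

Lemma conn_mono (S S' : {set 'I_m}) : S \subset S' -> conn S -> conn S'.
Proof.
move=> sub /connP H; apply/connP => x y.
apply: (connect_sub _ (H x y)) => u v a; apply: connect1; exact: adj_mono a.
Qed.

Lemma adj_del (S : {set 'I_m}) h x y : adj S x y -> ~~ ends h x || ~~ ends h y -> adj (S :\ h) x y.
Proof.
case/adjP=> i iS j hx; apply/adjP; exists i => //.
rewrite !inE iS andbT; apply/eqP => ih; subst i.
by move: hx; case/andP: (joins_ends j) => -> ->.
Qed.

Lemma path_del (S : {set 'I_m}) h x p : path (adj S) x p -> all (fun v => ~~ ends h v) (x :: p) ->
  path (adj (S :\ h)) x p.
Proof.
move=> pa al; apply: (@sub_in_path _ [pred v | ~~ ends h v] _ _ _ x p); last exact: pa.
  by move=> u v hu _ a; apply: adj_del a _; rewrite inE in hu; rewrite hu.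
exact: al.
Qed.

Lemma connect_sym_adj (S : {set 'I_m}) x y : connect (adj S) x y = connect (adj S) y x.
Proof. by apply: sym_connect_sym; exact: adj_sym. Qed.

Lemma removable (S : {set 'I_m}) h x y : conn S -> joins h x y -> connect (adj (S :\ h)) x y ->
  conn (S :\ h).
Proof.
move=> /connP cS j cxy; apply/connP => u v.
apply: (connect_sub _ (cS u v)) => a b /adjP[i iS ji].
case: (eqVneq i h) => [ih|ih].
  subst i; case: (joins_joins j ji) => -[-> ->] //; by rewrite connect_sym_adj.
apply: connect1; apply/adjP; exists i => //; by rewrite !inE ih.
Qed.


Section Dist.
Variables (S : {set 'I_m}) (r : 'I_n).
Hypothesis cS : conn S.

Fixpoint reach (k : nat) (v : 'I_n) : bool :=
  if k is k'.+1 then (v == r) || [exists w, adj S v w && reach k' w] else v == r.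

Lemma reach_path v p : path (adj S) v p -> last v p = r -> reach (size p) v.
Proof.
elim: p v => [|w p IH] v /=; first by move=> _ ->.
case/andP=> a pa l; apply/orP; right; apply/existsP; exists w.
by rewrite a IH.
Qed.

Lemma reach_ex v : exists k, reach k v.
Proof.
have /connectP[p pa l] := (elimT (connP S) cS) v r.
by exists (size p); apply: reach_path pa (esym l).
Qed.

Definition dist v := ex_minn (reach_ex v).

Lemma dist_reach v : reach (dist v) v.
Proof. by rewrite /dist; case: ex_minnP. Qed.

Lemma dist_min v k : reach k v -> (dist v <= k)%N.
Proof. by rewrite /dist; case: ex_minnP => k0 _ H /H. Qed.

Lemma dist_r : dist r = 0%N.
Proof. by apply/eqP; rewrite -leqn0; apply: dist_min; rewrite /= eqxx. Qed.

Lemma dist0 v : dist v = 0%N -> v = r.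
Proof. by move=> d0; have := dist_reach v; rewrite d0 /= => /eqP. Qed.

Lemma parent v : v != r -> exists2 f, f \in S & exists w, joins f v w /\ (dist w < dist v)%N.
Proof.
move=> vr; have := dist_reach v; case E: (dist v) => [|k] /=.
  by rewrite (negbTE vr).
rewrite (negbTE vr) /= => /existsP[w /andP[/adjP[f fS j] rw]].
exists f => //; exists w; split => //.
by have := dist_min rw; rewrite ltnS.
Qed.

Lemma avoid h a : (forall z, ends h z -> (dist a <= dist z)%N) -> connect (adj (S :\ h)) a r.
Proof.
move: {2}(dist a) (leqnn (dist a)) => k; elim: k a => [|k IH] a le H.
  by move: le; rewrite leqn0 => /eqP /dist0 ->.
case: (eqVneq a r) => [->|ar]; first exact: connect0.
have [f fS [w [j lt]]] := parent ar.
have fh : f != h.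
  apply/eqP => fh; subst f; have /andP[_ ew] := joins_ends j.
  by have := H w ew; rewrite leqNgt lt.
apply: (@connect_trans _ _ w).
  by apply: connect1; apply/adjP; exists f => //; rewrite !inE fh.
apply: IH; first by rewrite -ltnS; apply: leq_trans lt le.
by move=> z /H; apply: leq_trans; apply: ltnW.
Qed.

Definition far h := if (dist (e h).1 < dist (e h).2)%N then (e h).2 else (e h).1.

End Dist.


Lemma C1 (S : {set 'I_m}) : conn S -> (n.-1 <= #|S|)%N.
Proof.
move=> cS; case: (posnP n) => [->//|npos].
pose r := Ordinal npos.
have sub : [set~ r] \subset [set far r cS h | h in S].
  apply/subsetP => v; rewrite !inE => vr.
  have [f fS [w [j lt]]] := parent cS vr.
  apply/imsetP; exists f => //; rewrite /far.
  by case/orP: j => /eqP -> /=; [rewrite ltnNge (ltnW lt) | rewrite lt].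
have := subset_leq_card sub; rewrite cardsC1 card_ord => /leq_trans; apply.
exact: leq_imset_card.
Qed.

Lemma two_par (S : {set 'I_m}) r (cS : conn S) h h' v a a' :
  h \in S -> h' \in S -> h != h' -> joins h v a -> (dist r cS a < dist r cS v)%N ->
  joins h' v a' -> (dist r cS a' < dist r cS v)%N -> (dist r cS a <= dist r cS a')%N ->
  conn (S :\ h').
Proof.
move=> hS h'S hh' ja la ja' la' le.
apply: (removable (x:=v) (y:=a')) => //.
apply: (@connect_trans _ _ a).
  apply: connect1; apply/adjP; exists h => //; by rewrite !inE hS hh'.
apply: (@connect_trans _ _ r).
  apply: (avoid (r:=r) (cS:=cS)) => z /(ends_joins ja') [->|->] //.
  exact: ltnW.
rewrite connect_sym_adj; apply: (avoid (r:=r) (cS:=cS)) => z /(ends_joins ja') [->|->] //.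
exact: ltnW.
Qed.

Lemma C1' (S : {set 'I_m}) : conn S -> (forall h, h \in S -> ~~ conn (S :\ h)) ->
  (#|S| <= n.-1)%N.
Proof.
move=> cS H; case: (posnP n) => [n0|npos].
  rewrite n0 leqn0 cards_eq0; apply/eqP/setP => h; rewrite inE.
  by have [k kl] := (e h).1; rewrite n0 in kl.
pose r := Ordinal npos.
have neq h : h \in S -> dist r cS (e h).1 != dist r cS (e h).2.
  move=> hS; apply/negP => /eqP E; have := H h hS; apply/negP; rewrite negbK.
  apply: (removable (x:=(e h).1) (y:=(e h).2)) => //; first exact: joins_e.
  apply: (@connect_trans _ _ r).
    by apply: (avoid (r:=r) (cS:=cS)) => z /(ends_joins (joins_e h)) [->|->]; rewrite ?E.
  rewrite connect_sym_adj.
  by apply: (avoid (r:=r) (cS:=cS)) => z /(ends_joins (joins_e h)) [->|->]; rewrite ?E.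
have farS h : h \in S -> exists a, joins h (far r cS h) a /\ (dist r cS a < dist r cS (far r cS h))%N.
  move=> hS; rewrite /far; case: ltnP => lt.
    by exists (e h).1; split => //; rewrite joins_sym joins_e.
  exists (e h).2; split; first exact: joins_e.
  by rewrite ltn_neqAle lt andbT eq_sym neq.
have inj : {in S &, injective (far r cS)}.
  move=> h h' hS h'S E; case: (eqVneq h h') => // hh'; exfalso.
  have [a [ja la]] := farS h hS; have [a' [ja' la']] := farS h' h'S.
  rewrite -E in ja' la'.
  case: (leqP (dist r cS a) (dist r cS a')) => le.
    by have := H h' h'S; rewrite (two_par hS h'S hh' ja la ja' la' le).
  by have := H h hS; rewrite (two_par h'S hS _ ja' la' ja la (ltnW le)) // eq_sym.
rewrite -(card_in_imset inj).
have sub : [set far r cS h | h in S] \subset [set~ r].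
  apply/subsetP => v /imsetP[h hS ->]; rewrite !inE.
  apply/eqP => E; have [a [_ la]] := farS h hS.
  by move: la; rewrite E dist_r.
by have := subset_leq_card sub; rewrite cardsC1 card_ord.
Qed.


Lemma two_removable (T : {set 'I_m}) g : conn T -> g \notin T ->
  (forall h, h \in T -> ~~ joins h (e g).1 (e g).2) ->
  exists h1 h2, [/\ h1 \in T, h2 \in T, h1 != h2, conn ((g |: T) :\ h1) & conn ((g |: T) :\ h2)].
Proof.
move=> cT gT nj.
have gen x0 y0 : joins g x0 y0 -> x0 != y0 ->
    exists2 f, f \in T & exists w, joins f x0 w /\ conn ((g |: T) :\ f).
  move=> jg ne; have [f fT [w [j lt]]] := parent (r:=y0) cT ne.
  exists f => //; exists w; split => //.
  have cU : conn (g |: T) := conn_mono (subsetUr [set g] T) cT.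
  apply: (removable (x:=x0) (y:=w)) => //.
  have fg : f != g by apply: contraNneq gT => <-.
  apply: (@connect_trans _ _ y0).
    apply: connect1; apply/adjP; exists g => //.
    by rewrite !inE eq_sym fg eqxx.
  rewrite connect_sym_adj.
  have : connect (adj (T :\ f)) w y0.
    apply: (avoid (r:=y0) (cS:=cT)) => z /(ends_joins j) [->|->] //.
    exact: ltnW.
  apply: connect_sub => u v' a; apply: connect1; apply: adj_mono a.
  by apply: setSD; apply: subsetUr.
have xy : (e g).1 != (e g).2 := loopless g.
have [f1 f1T [w1 [j1 c1]]] := gen _ _ (joins_e g) xy.
have j' : joins g (e g).2 (e g).1 by rewrite joins_sym joins_e.
have yx : (e g).2 != (e g).1 by rewrite eq_sym.
have [f2 f2T [w2 [j2 c2]]] := gen _ _ j' yx.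
exists f1, f2; split => //.
apply/eqP => E; subst f2.
have /andP[ey _] := joins_ends j2.
case: (ends_joins j1 ey) => E.
  by move: xy; rewrite E eqxx.
by rewrite -E in j1; have := nj f1 f1T; rewrite j1.
Qed.

Lemma U_ge2 (U : {set 'I_m}) : (0 < n)%N -> conn U -> #|U| = n ->
  (2 <= #|[set h in U | conn (U :\ h)]|)%N.
Proof.
move=> npos cU cardU.
case: (boolP [exists f in U, conn (U :\ f)]) => [/existsP[f /andP[fU cf]]|nex]; last first.
  have H : forall h, h \in U -> ~~ conn (U :\ h).
    by move=> h hU; apply: contra nex => ch; apply/existsP; exists h; rewrite hU ch.
  have := C1' cU H; rewrite cardU; lia.
set T := U :\ f.
have fT : f \notin T by rewrite !inE eqxx.
have UE : U = f |: T by rewrite setD1K.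
case: (boolP [exists h in T, joins h (e f).1 (e f).2]) => [/existsP[h /andP[hT jh]]|nj].
  have hf : h != f by apply: contraNneq fT => <-.
  have ch : conn (U :\ h).
    apply: (removable (x:=(e f).1) (y:=(e f).2)) => //.
    apply: connect1; apply/adjP; exists f; last exact: joins_e.
    by rewrite !inE eq_sym hf fU.
  have sub : [set f; h] \subset [set h in U | conn (U :\ h)].
    apply/subsetP => z; rewrite !inE => /orP[]/eqP->; rewrite ?fU ?cf ?ch //.
    by move: hT; rewrite !inE => /andP[_ ->].
  by have := subset_leq_card sub; rewrite cards2 eq_sym hf.
have nj' : forall h, h \in T -> ~~ joins h (e f).1 (e f).2.
  by move=> h hT; apply: contra nj => jh; apply/existsP; exists h; rewrite hT jh.
have [h1 [h2 [h1T h2T h12 c1 c2]]] := two_removable cf fT nj'.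
rewrite -UE in c1 c2.
have sub : [set h1; h2] \subset [set h in U | conn (U :\ h)].
  apply/subsetP => z; rewrite !inE => /orP[]/eqP->; rewrite ?c1 ?c2 andbT.
    by move: h1T; rewrite !inE => /andP[_ ->].
  by move: h2T; rewrite !inE => /andP[_ ->].
by have := subset_leq_card sub; rewrite cards2 h12.
Qed.

Lemma U0_3 (T : {set 'I_m}) g : conn T -> g \notin T ->
  (forall h, h \in T -> ~~ joins h (e g).1 (e g).2) ->
  (3 <= #|[set h in g |: T | conn ((g |: T) :\ h)]|)%N.
Proof.
move=> cT gT nj.
have [h1 [h2 [h1T h2T h12 c1 c2]]] := two_removable cT gT nj.
have sub : g |: [set h1; h2] \subset [set h in g |: T | conn ((g |: T) :\ h)].
  apply/subsetP => z; rewrite !inE => /orP[/eqP->|/orP[]/eqP->].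
  - by rewrite eqxx /= setU1K.
  - by rewrite c1 h1T orbT.
  - by rewrite c2 h2T orbT.
have := subset_leq_card sub; rewrite cardsU1 cards2 h12 !inE.
have -> : (g == h1) = false by apply/negbTE; apply: contraNneq gT => ->.
by have -> : (g == h2) = false by apply/negbTE; apply: contraNneq gT => ->.
Qed.


Lemma exists_U0 : (0 < n)%N -> conn setT ->
  (exists c, [&& uniq c, (2 < size c)%N & cycle (simple_adj e) c]) ->
  exists U0, [/\ conn U0, #|U0| = n & (3 <= #|[set h in U0 | conn (U0 :\ h)]|)%N].
Proof.
move=> npos cset [c /and3P[uc sc cc]].
case: (@arg_minnP _ setT (fun S : {set 'I_m} => conn S) (fun S : {set 'I_m} => #|S|) cset) => T cT minT.
have nonrem : forall h, h \in T -> ~~ conn (T :\ h).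
  move=> h hT; apply/negP => ch; have := minT _ ch; rewrite (cardsD1 h T) hT; lia.
have cardT : #|T| = n.-1 by apply/eqP; rewrite eqn_leq C1' // C1.
case: (boolP [exists x, exists y, simple_adj e x y && ~~ adj T x y]).
  case/existsP=> x /existsP[y /andP[/andP[_ /existsP[g jg]] nxy]].
  have gT : g \notin T.
    by apply: contra nxy => gT; apply/adjP; exists g.
  have nj : forall h, h \in T -> ~~ joins h (e g).1 (e g).2.
    move=> h hT; apply/negP => jh; move/negP: nxy; apply; apply/adjP; exists h => //.
    by case: (joins_joins jg (joins_e g)) => -[E1 E2]; move: jh; rewrite E1 E2 // joins_sym.
  exists (g |: T); split.
  - exact: conn_mono (subsetUr [set g] T) cT.
  - by rewrite cardsU1 gT cardT; lia.
  - exact: U0_3.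
move=> none; exfalso.
have H : subrel (simple_adj e) (adj T).
  move=> u v suv; move: none; apply: contraNT => nuv.
  by apply/existsP; exists u; apply/existsP; exists v; rewrite suv nuv.
have := sub_cycle H cc; move: uc sc.
case: c {cc} => [|x0 [|x1 [|y c3]]] //= uc _.
case/andP=> a01 /andP[a1y]; rewrite rcons_path => /andP[py alast].
have [h hT jh] := elimT (adjP _ _ _) a01.
move: uc; rewrite !inE !negb_or => /andP[/and3P[_ x0y x0c3] /andP[/andP[x1y x1c3] _]].
have nE : forall z, z \in y :: c3 -> ~~ ends h z.
  move=> z zin; apply/negP => /(ends_joins jh) [] E; subst z.
    by move: zin; rewrite inE (negbTE x0c3) orbF (negbTE x0y).
  by move: zin; rewrite inE (negbTE x1c3) orbF (negbTE x1y).
have c10 : connect (adj (T :\ h)) x1 x0.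
  apply: (@connect_trans _ _ y).
    apply: connect1; apply: adj_del a1y _; by rewrite (nE y) ?orbT // mem_head.
  apply: (@connect_trans _ _ (last y c3)).
    apply/connectP; exists c3 => //; apply: path_del py _.
    by apply/allP => z; apply: nE.
  apply: connect1; apply: adj_del alast _; by rewrite nE // mem_last.
move/negP: (nonrem h hT); apply.
by apply: (removable (x:=x0) (y:=x1)) => //; rewrite connect_sym_adj.
Qed.


Definition Tset := [set S : {set 'I_m} | conn S && (#|S| == n.-1)].
Definition Uset := [set S : {set 'I_m} | conn S && (#|S| == n)].
Definition rr (U : {set 'I_m}) := #|[set h in U | conn (U :\ h)]|.

Lemma card_pairs (P : pred {set 'I_m}) (Q : {set 'I_m} -> pred 'I_m) :
  #|[set p : {set 'I_m} * 'I_m | P p.1 && Q p.1 p.2]| = (\sum_(S | P S) #|[set h | Q S h]|)%N.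
Proof.
rewrite -sum1_card.
rewrite (eq_bigl (fun p => P p.1 && Q p.1 p.2)) => [|p]; last by rewrite inE.
rewrite -(pair_big_dep P Q (fun _ _ => 1%N)).
apply: eq_bigr => S _; rewrite -sum1_card; apply: eq_bigl => h; by rewrite inE.
Qed.

Lemma counting : (\sum_(U in Uset) rr U <= #|Tset| * (m - n.-1))%N.
Proof.
set A := [set p : {set 'I_m} * 'I_m | (p.1 \in Tset) && (p.2 \notin p.1)].
set B := [set p : {set 'I_m} * 'I_m | (p.1 \in Uset) && ((p.2 \in p.1) && conn (p.1 :\ p.2))].
have cA : #|A| = (#|Tset| * (m - n.-1))%N.
  rewrite /A (card_pairs (fun S => S \in Tset) (fun S h => h \notin S)) -sum_nat_const; apply: eq_bigr => S.
  rewrite inE => /andP[_ /eqP cS].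
  have -> : [set h | h \notin S] = ~: S by apply/setP => h; rewrite !inE.
  by have := cardsC S; rewrite card_ord cS; move: #|~: S| => k; lia.
have cB : #|B| = (\sum_(U in Uset) rr U)%N by rewrite /B (card_pairs (fun S => S \in Uset) (fun S h => (h \in S) && conn (S :\ h))).
have inj : {in B &, injective (fun p : {set 'I_m} * 'I_m => (p.1 :\ p.2, p.2))}.
  move=> [U h] [U' h']; rewrite !inE /= => /andP[_ /andP[hU _]] /andP[_ /andP[h'U _]] [E1 E2].
  subst h'; by rewrite -(setD1K hU) -(setD1K h'U) E1.
rewrite -cB -cA -(card_in_imset inj); apply: subset_leq_card.
apply/subsetP => q /imsetP[[U h] pB ->]; move: pB.
rewrite !inE /= => /andP[/andP[cU /eqP cardU] /andP[hU ch]].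
rewrite ch eqxx andbT /=; apply/eqP.
by have := cardsD1 h U; rewrite hU cardU; move: #|U :\ h| => k; lia.
Qed.

Lemma sum_lower : (0 < n)%N -> conn setT ->
  (exists c, [&& uniq c, (2 < size c)%N & cycle (simple_adj e) c]) ->
  (2 * #|Uset| < \sum_(U in Uset) rr U)%N.
Proof.
move=> npos cset cyc.
have [U0 [cU0 card0 r3]] := exists_U0 npos cset cyc.
have U0in : U0 \in Uset by rewrite inE cU0 card0 eqxx.
have le : (\sum_(U in Uset) (2 + (U == U0)) <= \sum_(U in Uset) rr U)%N.
  apply: leq_sum => U; rewrite inE => /andP[cU /eqP cardU].
  case: eqP => [->|_]; first by rewrite addn1.
  by rewrite addn0; apply: U_ge2.
apply: leq_trans le; rewrite big_split /= sum_nat_const (bigD1 U0) //= eqxx.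
rewrite big1 => [|U /andP[_ /negbTE ->]] //.
by rewrite mulnC addn0 addn1.
Qed.

End Graph.

Local Open Scope ring_scope.

Section Alg.
Variables (R : realType) (n m : nat) (e : 'I_m -> 'I_n * 'I_n).
Hypothesis npos : (0 < n)%N.
Hypothesis C1h : forall S, sub_connected e S -> (n.-1 <= #|S|)%N.

Local Notation conn := (sub_connected e).

Definition aa (S : {set 'I_m}) := (#|S| - n.-1)%N.
Definition bb (S : {set 'I_m}) := (m - #|S|)%N.
Definition dd := (m + 1 - n)%N.

Definition PP : {poly R} := \sum_(S | conn S) ((-2) ^+ aa S)%:P * ('X + 1) ^+ bb S.

Lemma cardm (S : {set 'I_m}) : (#|S| <= m)%N.
Proof. by have := max_card S; rewrite card_ord. Qed.

Lemma coefX1 b k : ((('X + 1 : {poly R}) ^+ b)`_k = 'C(b, k)%:R).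
Proof.
elim: b k => [|b IH] k; first by rewrite expr0 coef1 bin0n.
rewrite exprSr mulrDr mulr1 coefD coefMX IH.
case: k => [|k] /=; first by rewrite add0r IH !bin0.
by rewrite IH binS natrD addrC.
Qed.

Lemma Jfun_P u : u != 1 -> Jfun e u = PP.[u].
Proof.
move=> u1; rewrite /Jfun /Hpoly /reliability.
have E : \sum_(S | conn S) (1 - 'X) ^+ #|S| * 'X ^+ (m - #|S|) =
   (\sum_(S | conn S) (1 - 'X) ^+ aa S * 'X ^+ bb S) * (1 - 'X : {poly R}) ^+ (n - 1).
  rewrite mulr_suml; apply: eq_bigr => S cS.
  rewrite -mulrA (mulrC ('X ^+ _)) mulrA -exprD /aa /bb.
  have hc := C1h cS; congr (_ * _); congr (_ ^+ _); rewrite /aa; lia.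
rewrite E mulpK; last first.
  by apply: expf_neq0; rewrite -opprB oppr_eq0 -polyC1 polyXsubC_eq0.
rewrite horner_sum mulr_sumr /PP horner_sum; apply: eq_bigr => S cS.
rewrite hornerM hornerCM !horner_exp !(hornerD, hornerN, hornerX, hornerC).
have dab : cyclo n m = (aa S + bb S)%N.
  by rewrite /cyclo /aa /bb; have := C1h cS; have := cardm S; lia.
have u1' : 1 - u != 0 by rewrite subr_eq0 eq_sym.
have h1 : (u - 1) * (1 - (-1 - u) / (1 - u)) = -2 by field.
have h2 : (u - 1) * ((-1 - u) / (1 - u)) = u + 1 by field.
by rewrite dab exprD -h1 -h2 !exprMn; ring.
Qed.


Lemma coef_PP k : PP`_k = \sum_(S | conn S) (-2) ^+ aa S * 'C(bb S, k)%:R.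
Proof. by rewrite /PP coef_sum; apply: eq_bigr => S _; rewrite coefCM coefX1. Qed.

Lemma coef_Pd : PP`_dd = #|Tset e|%:R.
Proof.
rewrite coef_PP.
rewrite (eq_bigr (fun S : {set 'I_m} => if #|S| == n.-1 then 1 else 0)); last first.
  move=> S cS; have hc := C1h cS; have hm := cardm S.
  case: eqP => E.
    have -> : aa S = 0%N by rewrite /aa; lia.
    have -> : bb S = dd by rewrite /bb /dd; lia.
    by rewrite expr0 mul1r binn.
  rewrite bin_small ?mulr0 //; rewrite /bb /dd; lia.
rewrite -big_mkcondr /= -(sumr_const (mem (Tset e))); apply: eq_bigl => S.
by rewrite inE.
Qed.

Lemma coef_Pd1 : (0 < dd)%N -> PP`_dd.-1 = dd%:R * #|Tset e|%:R - 2 * #|Uset e|%:R.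
Proof.
move=> dpos; rewrite coef_PP.
rewrite (eq_bigr (fun S : {set 'I_m} => (if #|S| == n.-1 then dd%:R else 0) + (if #|S| == n then -2 else 0))); last first.
  move=> S cS; have hc := C1h cS; have hm := cardm S.
  case: eqP => E.
    have -> : aa S = 0%N by rewrite /aa; lia.
    have -> : bb S = dd by rewrite /bb /dd; lia.
    have -> : (#|S| == n) = false by apply/eqP; lia.
    rewrite expr0 mul1r addr0; case: (dd) dpos => // k _.
    by rewrite /= binSn.
  case: eqP => E'.
    have -> : aa S = 1%N by rewrite /aa; lia.
    have -> : bb S = dd.-1 by rewrite /bb /dd; lia.
    by rewrite binn expr1 mulr1 add0r.
  rewrite bin_small ?mulr0 ?addr0 //; rewrite /bb /dd; lia.
rewrite big_split /= -!big_mkcondr /=.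
rewrite (eq_bigl (fun S => S \in Tset e)); last by move=> S; rewrite inE.
rewrite [X in _ + X](eq_bigl (fun S => S \in Uset e)); last by move=> S; rewrite inE.
rewrite !sumr_const mulr_natr mulr_natl.
rewrite mulNrn; congr (_ - _).
by rewrite -[LHS]mulr_natl -[RHS]mulr_natr.
Qed.

End Alg.

Lemma parity_contra (R : realType) (P J0 J1 : {poly R}) d : (0 < d)%N -> P`_d != 0 -> P`_d.-1 != 0 ->
  (forall u, u != 1 -> P.[u] = J0.[u ^+ 2] + u * J1.[u ^+ 2]) -> (J1 = 0 \/ J0 = 0) -> False.
Proof.
move=> dpos cd cd1 H HJ.
set P' := J0 \Po 'X^2 + 'X * (J1 \Po 'X^2).
have PP' : P = P'.
  apply/eqP; rewrite -subr_eq0; apply/negPn/negP => nz.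
  pose rs := [seq (i.+2)%:R : R | i <- iota 0 (size (P - P'))].
  have all_r : all (root (P - P')) rs.
    apply/allP => x /mapP[i _ ->]; rewrite /root /P' !(hornerD, hornerN, hornerM, horner_comp, hornerXn, hornerX).
    rewrite H ?subrr //.
    by rewrite pnatr_eq1.
  have uq : uniq rs.
    rewrite map_inj_uniq ?iota_uniq // => i j /eqP; rewrite eqr_nat => /eqP [] //.
  by have := max_poly_roots nz all_r uq; rewrite size_map size_iota ltnn.
have c1 k : odd k -> J1 = 0 -> P`_k = 0.
  move=> ok J1z; rewrite PP' /P' J1z comp_poly0 mulr0 addr0 coef_comp_poly_Xn //.
  by rewrite dvdn2 ok.
have c0 k : ~~ odd k -> J0 = 0 -> P`_k = 0.
  move=> ek J0z; rewrite PP' /P' J0z comp_poly0 add0r coefXM.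
  case: k ek => [|k] //= ek; rewrite coef_comp_poly_Xn // dvdn2.
  by rewrite (negbTE ek).
case: d dpos cd cd1 => [|d] // _ cd cd1.
case: HJ => Hz; case: (boolP (odd d)) => od.
- by move: cd1; rewrite /= (c1 d od Hz) eqxx.
- by move: cd; rewrite (c1 d.+1) ?eqxx //= od.
- by move: cd; rewrite (c0 d.+1) ?eqxx //= od.
- by move: cd1; rewrite /= (c0 d od Hz) eqxx.
Qed.

Unset Implicit Arguments.
Set Strict Implicit.

Theorem proposition3p2 (R : realType) (n m : nat) (e : 'I_m -> 'I_n * 'I_n) :
  is_network e ->
  (exists J0 J1 : {poly R},
      (forall u : R, u != 1 -> Jfun e u = J0.[u ^+ 2] + u * J1.[u ^+ 2]) /\
      (J1 = 0 \/ J0 = 0)) ->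
  is_tree (simple_adj e).
Proof.
move=> [npos [loopless cset]] [J0 [J1 [HJ HJ01]]].
split.
  move=> x y; have := elimT (connP e setT) cset x y.
  apply: connect_sub => u v a; apply: connect1.
  rewrite /simple_adj (adj_neq loopless a) /=.
  case/adjP: a => i _ j; apply/existsP; exists i; exact: j.
move=> c uc sc; apply/negP => cc.
have cyc : exists c, [&& uniq c, (2 < size c)%N & cycle (simple_adj e) c].
  by exists c; rewrite uc sc cc.
have lower := sum_lower loopless npos cset cyc.
have up := counting e.
have C1h : forall S, sub_connected e S -> (n.-1 <= #|S|)%N := fun S => @C1 n m e S.
have dE : (m - n.-1)%N = dd n m by rewrite /dd; lia.
rewrite dE in up.
have lt : (2 * #|Uset e| < #|Tset e| * dd n m)%N := leq_trans lower up.
have dpos : (0 < dd n m)%N by move: lt; case: (dd n m) => //; rewrite muln0.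
have tpos : (0 < #|Tset e|)%N by move: lt; case: #|Tset e|.
apply: (parity_contra (P := PP R e) (d := dd n m) dpos _ _ _ HJ01).
- by rewrite coef_Pd // pnatr_eq0 -lt0n tpos.
- rewrite coef_Pd1 // subr_eq0 -natrM -(natrM _ 2) eqr_nat mulnC.
  by apply/eqP => E; move: lt; rewrite E ltnn.
- by move=> u u1; rewrite -(Jfun_P npos C1h u1); exact: HJ.
Qed.
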